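(* Let $L$ be a finite index set and let $Z=(Z^{(u)})_{u\in L}$, where each $Z^{(u)}\in\mathbb{R}^{n_u}$ (entries indexed by $j$). Let $k$ be a positive integer and, for each $u\in L$, let $\alpha^{(u)}_1,\alpha^{(u)}_2,\alpha^{(u)}_3,\alpha^{(u)}_4\ge 0$ with $\alpha^{(u)}_1\le\alpha^{(u)}_2$, and let $E_{\rm budget}\in\mathbb{R}$ with $C:=E_{\rm budget}-\sum_{u\in L}\alpha^{(u)}_4\ge 0$. For each $u$, fix a set $T^{(u)}$ of $\min(k,n_u)$ indices $j$ such that every $|Z^{(u)}_j|$ with $j\in T^{(u)}$ is at least every $|Z^{(u)}_{j'}|$ with $j'\notin T^{(u)}$ (ties broken arbitrarily), and define $A=(A^{(u)})_{u\in L}$ of the same shape as $Z$ by $A^{(u)}_j=\alpha^{(u)}_1+\alpha^{(u)}_3$ if $j\in T^{(u)}$ and $A^{(u)}_j=\alpha^{(u)}_2+\alpha^{(u)}_3$ otherwise. Consider the projection problem $$\mathrm{P}_{\Omega(E_{\rm budget})}(Z):=\operatorname{argmin}_{W\in\Omega(E_{\rm budget})}\|W-Z\|^2$$ and the $0/1$ knapsack problem $$\max_{\xi\ \text{binary, same shape as } Z}\ \langle Z\odot Z,\xi\rangle\quad\text{s.t.}\quad \langle A,\xi\rangle\le C.$$ Then these problems are equivalent: $\min_{W\in\Omega(E_{\rm budget})}\|W-Z\|^2=\|Z\|^2-\max\{\langle Z\odot Z,\xi\rangle:\xi\text{ binary},\ \langle A,\xi\rangle\le C\}$, and if $\xi^*$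 is an optimal solution of the knapsack problem, then $Z\odot\xi^*\in\Omega(E_{\rm budget})$ and $Z\odot\xi^*$ is an optimal solution of the projection problem.
   Context: For $W=(W^{(u)})_{u\in L}$ with $W^{(u)}\in\mathbb{R}^{n_u}$, $\|W^{(u)}\|_0$ denotes the number of nonzero entries and $\|W\|^2=\sum_u\sum_j (W^{(u)}_j)^2$. The energy-constraint set is $$\Omega(E_{\rm budget})=\Big\{W:\ \sum_{u\in L}\Big(\alpha^{(u)}_1\min(k,\|W^{(u)}\|_0)+\alpha^{(u)}_2\max(0,\|W^{(u)}\|_0-k)+\alpha^{(u)}_3\|W^{(u)}\|_0+\alpha^{(u)}_4\Big)\le E_{\rm budget}\Big\}.$$ $\odot$ is the entrywise product, $\langle\cdot,\cdot\rangle$ the entrywise inner product, and ''binary'' means all entries lie in $\{0,1\}$. *)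

(* Defs.v *)
From HB Require Import structures.
From mathcomp Require Import all_boot all_order all_algebra.
Set Implicit Arguments. Unset Strict Implicit. Unset Printing Implicit Defensive.
Import Order.TTheory GRing.Theory Num.Theory.
Local Open Scope ring_scope.

Definition lfam (R : Type) (L : finType) (n : L -> nat) :=
  forall u : L, 'I_(n u) -> R.

Section Defs.
Variables (R : realFieldType) (L : finType) (n : L -> nat).

Definition nnz (W : lfam R n) (u : L) : nat := #|[pred j | W u j != 0]|.

Definition sqnorm (W : lfam R n) : R := \sum_(u : L) \sum_(j : 'I_(n u)) W u j ^+ 2.

Definition inner (X Y : lfam R n) : R := \sum_(u : L) \sum_(j : 'I_(n u)) X u j * Y u j.

Definition hadamard (X Y : lfam R n) : lfam R n := fun u j => X u j * Y u j.

Definition fsub (X Y : lfam R n) : lfam R n := fun u j => X u j - Y u j.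

Definition binary (xi : lfam R n) : Prop := forall u j, xi u j = 0 \/ xi u j = 1.

(* energy of W; (nnz - k)%N is truncated, i.e. max(0, nnz - k) *)
Definition energy (k : nat) (a1 a2 a3 a4 : L -> R) (W : lfam R n) : R :=
  \sum_(u : L) (a1 u * (minn k (nnz W u))%:R + a2 u * (nnz W u - k)%:R
                + a3 u * (nnz W u)%:R + a4 u).

Definition Omega (k : nat) (a1 a2 a3 a4 : L -> R) (E : R) (W : lfam R n) : Prop :=
  energy k a1 a2 a3 a4 W <= E.

Definition costA (a1 a2 a3 : L -> R) (T : forall u : L, {set 'I_(n u)}) : lfam R n :=
  fun u j => if j \in T u then a1 u + a3 u else a2 u + a3 u.

Definition knap_feasible (A : lfam R n) (C : R) (xi : lfam R n) : Prop :=
  binary xi /\ inner A xi <= C.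

Definition knap_optimal (Z A : lfam R n) (C : R) (xi : lfam R n) : Prop :=
  knap_feasible A C xi /\
  forall xi', knap_feasible A C xi' -> inner (hadamard Z Z) xi' <= inner (hadamard Z Z) xi.

End Defs.

(* Main.v *)
Require Import Defs.
From HB Require Import structures.
From mathcomp Require Import all_boot all_order all_algebra.
From mathcomp Require Import zify ring lra.
Import Order.TTheory GRing.Theory Num.Theory.
Local Open Scope ring_scope.

Lemma swap_lemma (R : realFieldType) (I : finType) (T : {set I}) (z : I -> R)
  (htop : forall j j', j \in T -> j' \notin T -> z j' <= z j) :
  forall S : {set I}, exists S' : {set I},
   [/\ #|S'| = #|S|, #|S' :&: T| = minn #|T| #|S| &
       \sum_(j in S) z j <= \sum_(j in S') z j].
Proof.
move=> S; move: {2}#|S :\: T|.+1 (ltnSn #|S :\: T|) => m.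
elim: m S => [//|m IH] S hm.
case: (pickP [pred j in S :\: T]) => [j /= hj|hnone].
  case: (pickP [pred j in T :\: S]) => [j' /= hj'|hnone'].
    move: hj hj'; rewrite !inE => /andP[hjT hjS] /andP[hj'S hj'T].
    pose S2 := j' |: (S :\ j).
    have hprop : S2 :\: T \proper S :\: T.
      apply/properP; split.
        apply/subsetP => x; rewrite !inE.
        case/andP=> hxT /orP[/eqP exj|/andP[_ ->]]; last by rewrite hxT.
        by rewrite exj hj'T in hxT.
      exists j; first by rewrite !inE hjT hjS.
      rewrite !inE eqxx /=.
      rewrite orbF; apply/negP=> /andP[_ /eqP ejj]; by rewrite ejj hj'T in hjT.
    have hc : (#|S2 :\: T| < m)%N.
      by move: (proper_card hprop) => h; rewrite -ltnS; apply: leq_trans hm.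
    have [S' [h1 h2 h3]] := IH S2 hc.
    have hcardS2 : #|S2| = #|S|.
      rewrite /S2 cardsU1 !inE (negbTE hj'S) andbF /= add1n (cardsD1 j S) hjS.
      by rewrite add1n.
    exists S'; split; first by rewrite h1.
      by rewrite h2 hcardS2.
    apply: le_trans h3.
    rewrite (big_setD1 j hjS) /S2 big_setU1 /=; last by rewrite !inE (negbTE hj'S) andbF.
    by rewrite lerD2r; apply: htop.
  exists S; split => //.
  have hsub : T \subset S.
    apply/subsetP => x hx; apply/negPn/negP => hxS.
    by move: (hnone' x); rewrite /= !inE hx hxS.
  rewrite (setIidPr hsub); apply/esym/minn_idPl; exact: subset_leq_card.
exists S; split => //.
have hsub : S \subset T.
  apply/subsetP => x hx; apply/negPn/negP => hxT.
  by move: (hnone x); rewrite /= !inE hx hxT.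
rewrite (setIidPl hsub); apply/esym/minn_idPr; exact: subset_leq_card.
Qed.

Definition fE (R : realFieldType) (k m : nat) (b1 b2 b3 : R) :=
  b1 * (minn k m)%:R + b2 * (m - k)%:R + b3 * m%:R.
Arguments fE {R}.

Lemma fE_cost (R : realFieldType) (k m q : nat) (b1 b2 b3 : R) :
  b1 <= b2 -> (q <= minn k m)%N ->
  fE k m b1 b2 b3 <= (b1 + b3) *+ q + (b2 + b3) *+ (m - q).
Proof.
move=> h12 hq; rewrite /fE.
have e1 : (m - k = m - minn k m)%N by lia.
rewrite e1 -(mulr_natr (b1+b3)) -(mulr_natr (b2+b3)) natrB ?natrB; [|lia|lia].
set p := (minn k m)%:R; set Q := q%:R; set M := m%:R.
rewrite -subr_ge0.
have -> : (b1 + b3) * Q + (b2 + b3) * (M - Q) - (b1 * p + b2 * (M - p) + b3 * M)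
   = (b2 - b1) * (p - Q) by ring.
by apply: mulr_ge0; rewrite subr_ge0 // ler_nat.
Qed.

Lemma fE_costE (R : realFieldType) (k m : nat) (b1 b2 b3 : R) :
  fE k m b1 b2 b3 = (b1 + b3) *+ minn k m + (b2 + b3) *+ (m - minn k m).
Proof.
rewrite /fE.
have e1 : (m - k = m - minn k m)%N by lia.
rewrite e1 -(mulr_natr (b1+b3)) -(mulr_natr (b2+b3)) natrB; last lia.
ring.
Qed.

Lemma fE_mono (R : realFieldType) (k m m' : nat) (b1 b2 b3 : R) :
  0 <= b1 -> 0 <= b2 -> 0 <= b3 -> (m' <= m)%N ->
  fE k m' b1 b2 b3 <= fE k m b1 b2 b3.
Proof.
move=> h1 h2 h3 hm; rewrite /fE.
rewrite lerD // ?lerD //; apply: ler_wpM2l => //; rewrite ler_nat; lia.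
Qed.

Lemma sum_ind (R : realFieldType) (I : finType) (S : {set I}) (x : I -> R) :
  \sum_j x j * (if j \in S then 1 else 0) = \sum_(j in S) x j.
Proof.
rewrite [RHS]big_mkcond /=; apply: eq_bigr => j _.
by case: (j \in S); rewrite ?mulr1 ?mulr0.
Qed.

Lemma sum_bin (R : realFieldType) (I : finType) (xi x : I -> R) :
  (forall j, xi j = 0 \/ xi j = 1) ->
  \sum_j x j * xi j = \sum_(j in [set j | xi j == 1]) x j.
Proof.
move=> hb; rewrite -sum_ind; apply: eq_bigr => j _; rewrite inE.
by case: (hb j) => ->; rewrite ?eqxx // eq_sym oner_eq0.
Qed.

Lemma cost_set (R : realFieldType) (I : finType) (S T : {set I}) (b1 b2 : R) :
  \sum_(j in S) (if j \in T then b1 else b2) = b1 *+ #|S :&: T| + b2 *+ #|S :\: T|.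
Proof.
rewrite (big_setID T) /=; congr (_ + _).
  rewrite -sumr_const; apply: eq_bigr => j; rewrite inE => /andP[_ ->] //.
rewrite -sumr_const; apply: eq_bigr => j; rewrite inE => /andP[/negbTE -> _] //.
Qed.

Lemma energyE' (R : realFieldType) (L : finType) (n : L -> nat) k (a1 a2 a3 a4 : L -> R) (W : lfam R n) : energy k a1 a2 a3 a4 W = \sum_u fE k (nnz W u) (a1 u) (a2 u) (a3 u) + \sum_u a4 u.
Proof. rewrite -big_split. by apply: eq_bigr => u _. Qed.

Theorem theorem1 (R : realFieldType) (L : finType) (n : L -> nat)
  (Z : lfam R n) (k : nat) (a1 a2 a3 a4 : L -> R) (E : R)
  (T : forall u : L, {set 'I_(n u)})
  (hk : (0 < k)%N)
  (ha1 : forall u, 0 <= a1 u) (ha2 : forall u, 0 <= a2 u)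
  (ha3 : forall u, 0 <= a3 u) (ha4 : forall u, 0 <= a4 u)
  (ha12 : forall u, a1 u <= a2 u)
  (hC : 0 <= E - \sum_(u : L) a4 u)
  (hTcard : forall u, #|T u| = minn k (n u))
  (hTtop : forall u (j j' : 'I_(n u)), j \in T u -> j' \notin T u -> `|Z u j'| <= `|Z u j|) :
  let C := E - \sum_(u : L) a4 u in
  let A := costA a1 a2 a3 T in
  (exists xi, knap_optimal Z A C xi) /\
  forall xi, knap_optimal Z A C xi ->
    [/\ Omega k a1 a2 a3 a4 E (hadamard xi Z),
        (forall W, Omega k a1 a2 a3 a4 E W ->
           sqnorm (fsub (hadamard xi Z) Z) <= sqnorm (fsub W Z)) &
        sqnorm (fsub (hadamard xi Z) Z) = sqnorm Z - inner (hadamard Z Z) xi].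
Proof.
move=> C A.
have costS : forall u (S : {set 'I_(n u)}), \sum_(j in S) A u j =
    (a1 u + a3 u) *+ #|S :&: T u| + (a2 u + a3 u) *+ #|S :\: T u|.
  by move=> u S; exact: cost_set.
have hcost : forall u (S : {set 'I_(n u)}), (#|S :&: T u| <= minn k #|S|)%N ->
    fE k #|S| (a1 u) (a2 u) (a3 u) <= \sum_(j in S) A u j.
  move=> u S hq.
  have e : (#|S :\: T u| = #|S| - #|S :&: T u|)%N by rewrite -(cardsID (T u) S) addKn.
  by rewrite costS e; apply: fE_cost.
have energyE : forall W : lfam R n, energy k a1 a2 a3 a4 W =
    \sum_u fE k (nnz W u) (a1 u) (a2 u) (a3 u) + \sum_u a4 u.
  exact: energyE'.
split.
- pose I := {u : L & 'I_(n u)}.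
  pose xiS (S : {set I}) : lfam R n :=
    fun u j => if Tagged (fun u => 'I_(n u)) j \in S then 1 else 0.
  pose P := fun S => inner A (xiS S) <= C.
  pose F := fun S => inner (hadamard Z Z) (xiS S).
  have P0 : P set0.
    rewrite /P /inner big1 // => u _; rewrite big1 // => j _.
    by rewrite /xiS inE mulr0.
  case: (@arg_maxP _ _ _ set0 P F P0) => S PS HS.
  have bin : forall S, binary (xiS S).
    by move=> S' u j; rewrite /xiS; case: (_ \in _); auto.
  exists (xiS S); split; first by split.
  move=> xi' [hb' hA'].
  pose S' := [set x : I | xi' (tag x) (tagged x) == 1].
  have eq : forall X, inner X xi' = inner X (xiS S').
    move=> X; apply: eq_bigr => u _; apply: eq_bigr => j _.
    rewrite /xiS inE /=; case: (hb' u j) => ->; rewrite ?eqxx //.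
    by rewrite eq_sym oner_eq0.
  rewrite eq; apply: HS.
  by rewrite /P -eq.
- move=> xi [[hb hA] hopt].
  pose Sx := fun u => [set j | xi u j == 1].
  have innerX : forall X, inner X xi = \sum_u \sum_(j in Sx u) X u j.
    by move=> X; apply: eq_bigr => u _; apply: sum_bin.
  have hval : sqnorm (fsub (hadamard xi Z) Z) = sqnorm Z - inner (hadamard Z Z) xi.
    rewrite /sqnorm /inner -sumrB; apply: eq_bigr => u _; rewrite -sumrB.
    apply: eq_bigr => j _.
    by rewrite /fsub /hadamard; case: (hb u j) => ->; ring.
  split => //.
  + rewrite /Omega energyE.
    suff : \sum_u fE k (nnz (hadamard xi Z) u) (a1 u) (a2 u) (a3 u) <= C.
      by rewrite /C; lra.
    apply: le_trans hA.
    rewrite innerX; apply: ler_sum => u _.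
    have h1 : (#|Sx u :&: T u| <= #|T u|)%N by apply: subset_leq_card; apply: subsetIr.
    have h2 : (#|Sx u :&: T u| <= #|Sx u|)%N by apply: subset_leq_card; apply: subsetIl.
    have hq : (#|Sx u :&: T u| <= minn k #|Sx u|)%N.
      by rewrite leq_min h2 andbT; apply: leq_trans h1 _; rewrite hTcard geq_minl.
    apply: le_trans (hcost u (Sx u) hq).
    apply: fE_mono => //.
    rewrite /nnz; apply: subset_leq_card; apply/subsetP => j.
    by rewrite !inE /hadamard; case: (hb u j) => ->; rewrite ?mul0r ?eqxx.
  + move=> W hW.
    pose Sw := fun u => [set j | W u j != 0].
    have hnnz : forall u, nnz W u = #|Sw u|.
      by move=> u; apply: eq_card => j; rewrite !inE.
    pose good u (S' : {set 'I_(n u)}) := [&& #|S'| == #|Sw u|,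
       #|S' :&: T u| == minn #|T u| #|Sw u| &
       \sum_(j in Sw u) Z u j ^+ 2 <= \sum_(j in S') Z u j ^+ 2].
    pose Sp u := odflt set0 [pick S' | good u S'].
    have hSp : forall u, good u (Sp u).
      move=> u; rewrite /Sp; case: pickP => [S' //|hn] /=.
      have htop : forall j j', j \in T u -> j' \notin T u -> Z u j' ^+ 2 <= Z u j ^+ 2.
        move=> j j' hj hj'; have h := hTtop u j j' hj hj'.
        rewrite -(real_normK (num_real (Z u j'))) -(real_normK (num_real (Z u j))).
        have := normr_ge0 (Z u j'); nra.
      have [S' [h1 h2 h3]] := @swap_lemma R _ (T u) (fun j => Z u j ^+ 2) htop (Sw u).
      by move: (hn S'); rewrite /good h1 h2 h3 !eqxx.
    pose xi' : lfam R n := fun u j => if j \in Sp u then 1 else 0.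
    have feas : knap_feasible A C xi'.
      split; first by move=> u j; rewrite /xi'; case: (_ \in _); auto.
      rewrite /inner (eq_bigr (fun u => \sum_(j in Sp u) A u j)); last first.
        by move=> u _; apply: sum_ind.
      rewrite (eq_bigr (fun u => fE k (nnz W u) (a1 u) (a2 u) (a3 u))); last first.
        move=> u _; case/and3P: (hSp u) => /eqP e1 /eqP e2 _.
        have hle : (#|Sw u| <= n u)%N by apply: leq_trans (max_card _) _; rewrite card_ord.
        have e3 : (#|Sp u :\: T u| = #|Sw u| - minn k #|Sw u|)%N.
          have hID := cardsID (T u) (Sp u); rewrite e2 hTcard e1 in hID; lia.
        have e4 : minn (minn k (n u)) #|Sw u| = minn k #|Sw u| by lia.
        by rewrite costS e3 e2 hTcard e4 hnnz fE_costE.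
      move: hW; rewrite /Omega energyE /C; lra.
    have hv := hopt xi' feas.
    have h1 : \sum_u \sum_(j in Sw u) Z u j ^+ 2 <= inner (hadamard Z Z) xi'.
      rewrite /inner; apply: ler_sum => u _.
      rewrite /xi' sum_ind.
      case/and3P: (hSp u) => _ _ h; apply: le_trans h _.
      by apply: ler_sum => j _; rewrite /hadamard expr2.
    have h2 : sqnorm Z - \sum_u \sum_(j in Sw u) Z u j ^+ 2 <= sqnorm (fsub W Z).
      rewrite /sqnorm -sumrB; apply: ler_sum => u _.
      rewrite [X in _ - X]big_mkcond /= -sumrB; apply: ler_sum => j _.
      rewrite inE /fsub; case: eqP => [->|_].
        by rewrite /= subr0 sub0r sqrrN.
      by rewrite subrr sqr_ge0.
    rewrite hval; lra.
Qed.
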